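(* Let $p\ge3$ and $k\ge1$ be integers, $Q=2^{p-1}$, and for $1\le j\le k$ let $g_j(\alpha)=j\alpha^{p-1}-(k-j+1)-(j-1)(1+\alpha)^{p-1}$. Then for every integer $j$ with $k^{\frac1{p-1}}+1\le j\le k$ we have $g_j\big(Q(j-1)\big)>0$. Consequently the smallest positive root $a_j$ of $g_j$ satisfies $a_j<2^{p-1}(j-1)$ for such $j$. *)

(* Defs.v *)
From Stdlib Require Import Reals Lra Lia.
Open Scope R_scope.

Definition Q (p : nat) : R := 2 ^ (p - 1).

(* g_j(alpha) = j alpha^(p-1) - (k - j + 1) - (j - 1) (1 + alpha)^(p-1),
   with the integer coefficients computed in R (no truncated subtraction). *)
Definition g (p k j : nat) (a : R) : R :=
  INR j * a ^ (p - 1) - (INR k - INR j + 1) - (INR j - 1) * (1 + a) ^ (p - 1).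

Definition smallest_pos_root (f : R -> R) (a : R) : Prop :=
  0 < a /\ f a = 0 /\ (forall b, 0 < b -> f b = 0 -> a <= b).

(* Main.v *)
Require Import Defs.
From Stdlib Require Import Reals Lra Lia.
Open Scope R_scope.

Lemma pow_bound : forall n x, 0 <= x -> INR n * x <= 1 ->
  (1+x)^n <= 1 + INR n*x + (INR n*x)^2.
Proof.
  induction n as [|n IH]; intros x hx h.
  - simpl. lra.
  - rewrite S_INR in h |- *.
    assert (h0 : 0 <= INR n) by apply pos_INR.
    assert (IH' := IH x hx ltac:(nra)).
    simpl pow. simpl pow in IH'.
    assert (INR n * x <= 1) by nra.
    assert (INR n * INR n * x * x * x <= (INR n + 1) * x * x) by nra.
    assert ((1+x) * (1 + x) ^ n <= (1+x) * (1 + INR n * x + INR n * x * (INR n * x * 1)))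
      by (apply Rmult_le_compat_l; lra).
    assert ((1+x) * (1 + INR n * x + INR n * x * (INR n * x * 1)) = 1 + (INR n + 1) * x + (INR n + 1) * x * ((INR n + 1) * x * 1) - ((INR n + 1) * x * x - INR n * INR n * x * x * x)) by ring.
    lra.
Qed.

Lemma two_pow : forall n, (2 <= n)%nat -> 2 * INR n <= 2 ^ n.
Proof.
  intros n hn. induction hn.
  - simpl. lra.
  - rewrite S_INR. simpl pow.
    assert (1 <= 2 ^ m) by (apply pow_R1_Rle; lra).
    assert (2 <= INR m) by (apply (le_INR 2); lia). lra.
Qed.

Lemma g_cont : forall p k j, continuity (g p k j).
Proof.
  intros p k j. unfold g. reg.
Qed.

Lemma g_pos (p k j : nat) (hp : (3 <= p)%nat) (hk : (1 <= k)%nat)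
  (hj1 : Rpower (INR k) (/ INR (p - 1)) + 1 <= INR j) :
  g p k j (Q p * (INR j - 1)) > 0.
Proof.
  unfold g, Q.
  set (n := (p - 1)%nat) in *.
  assert (hn : (2 <= n)%nat) by (unfold n; lia).
  set (m := INR j - 1).
  assert (hk1 : 1 <= INR k) by (apply (le_INR 1); lia).
  assert (hnR : 0 < INR n) by (apply lt_0_INR; lia).
  assert (hr : 0 < Rpower (INR k) (/ INR n)) by apply exp_pos.
  assert (hm : Rpower (INR k) (/ INR n) <= m) by (unfold m; lra).
  assert (hkm : INR k <= m ^ n).
  { replace (INR k) with ((Rpower (INR k) (/ INR n)) ^ n).
    - apply pow_incr; lra.
    - rewrite <- Rpower_pow by lra. rewrite Rpower_mult.
      rewrite Rinv_l by lra. apply Rpower_1; lra. }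
  assert (hm1 : 1 <= m).
  { destruct (Rle_or_lt 1 m); auto.
    assert (m ^ n < 1).
    { apply pow_lt_1_compat; [lra| lia]. }
    lra. }
  set (t := 2 ^ n).
  assert (ht : 2 * INR n <= t) by (apply two_pow; auto).
  set (a := t * m).
  assert (ha : 0 < a) by (unfold a; nra).
  set (x := / a).
  assert (hx : 0 < x) by (apply Rinv_0_lt_compat; auto).
  assert (hax : a * x = 1) by (unfold x; field; lra).
  assert (hnx : INR n * x * m <= 1/2).
  { assert (INR n * x * m * t = INR n) by (unfold x, a; field; nra).
    nra. }
  assert (hnx1 : INR n * x <= 1) by nra.
  assert (hb := pow_bound n x (Rlt_le _ _ hx) hnx1).
  assert (e1 : (1 + a) ^ n = a ^ n * (1 + x) ^ n).
  { rewrite <- Rpow_mult_distr. f_equal. unfold x. field. lra. }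
  assert (han : 0 < a ^ n) by (apply pow_lt; auto).
  assert (e2 : a ^ n = 2 ^ (n * n) * m ^ n).
  { unfold a, t. rewrite Rpow_mult_distr, pow_mult. reflexivity. }
  assert (h4 : 2 ^ 2 <= 2 ^ (n * n)) by (apply Rle_pow; [lra|nia]).
  assert (hmn : 0 < m ^ n) by (apply pow_lt; lra).
  assert (hq : 4 * m ^ n <= a ^ n) by (rewrite e2; simpl in h4; nra).
  rewrite e1.
  replace (INR j) with (m + 1) by (unfold m; ring).
  assert (hsq : (INR n * x) ^ 2 * m <= 1/4).
  { assert (h0 : 0 <= INR n * x * m) by (apply Rmult_le_pos; [apply Rmult_le_pos|]; lra).
    assert (INR n * x * m * (INR n * x * m) <= 1/4) by nra.
    assert (h1 : 0 <= (INR n * x) ^ 2) by (apply pow2_ge_0).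
    assert ((INR n * x) ^ 2 * m <= (INR n * x) ^ 2 * m * m) by nra.
    assert ((INR n * x) ^ 2 * m * m = INR n * x * m * (INR n * x * m)) by ring.
    lra. }
  assert (m * (1+x)^n <= m * (1 + INR n * x + (INR n * x)^2)) by nra.
  assert (m * (1 + INR n * x + (INR n * x)^2) <= m + 3/4) by nra.
  assert (a ^ n * (m * (1+x)^n) <= a ^ n * (m + 3/4)) by nra.
  nra.
Qed.

Theorem mainTheorem8 (p k j : nat) (hp : (3 <= p)%nat) (hk : (1 <= k)%nat)
  (hj1 : Rpower (INR k) (/ INR (p - 1)) + 1 <= INR j) (hj2 : (j <= k)%nat) :
  g p k j (Q p * (INR j - 1)) > 0 /\
  exists a, smallest_pos_root (g p k j) a /\ a < Q p * (INR j - 1).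
Proof.
  assert (hpos := g_pos p k j hp hk hj1).
  split; [exact hpos|].
  set (A := Q p * (INR j - 1)) in *.
  set (f := g p k j) in *.
  assert (hf0 : f 0 < 0).
  { unfold f, g. rewrite pow_i by lia. rewrite Rplus_0_r, pow1.
    assert (1 <= INR k) by (apply (le_INR 1); lia). lra. }
  assert (hc := g_cont p k j). fold f in hc.
  assert (hA : 0 < A).
  { destruct (Rle_or_lt A 0) as [h|h]; auto.
    exfalso.
    unfold A, Q in h.
    assert (0 < 2 ^ (p-1)) by (apply pow_lt; lra).
    assert (hk1 : 1 <= INR k) by (apply (le_INR 1); lia).
    assert (0 < Rpower (INR k) (/ INR (p - 1))) by apply exp_pos.
    nra. }
  set (E := fun x => 0 <= x <= A /\ forall y, 0 <= y <= x -> f y < 0).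
  assert (hE0 : E 0).
  { split; [lra|]. intros y hy. replace y with 0 by lra. auto. }
  assert (hEb : bound E).
  { exists A. intros x [hx _]. lra. }
  destruct (completeness E hEb (ex_intro _ 0 hE0)) as [a [hub hlub]].
  assert (ha0 : 0 <= a) by (apply hub; auto).
  assert (haA : a <= A) by (apply hlub; intros x [hx _]; lra).
  assert (hbelow : forall y, 0 <= y < a -> f y < 0).
  { intros y hy.
    destruct (Classical_Prop.classic (exists x, E x /\ y <= x)) as [[x [[_ hx] hyx]]|hn].
    - apply hx; lra.
    - exfalso.
      assert (a <= y); [|lra].
      apply hlub. intros x hx. destruct (Rle_or_lt x y); auto.
      exfalso; apply hn; exists x; split; auto; lra. }
  assert (hcont : forall z, forall s, (f z < 0 /\ s = 1) \/ (f z > 0 /\ s = -1) ->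
           exists d, 0 < d /\ forall y, Rabs (y - z) < d -> s * f y < 0).
  { intros z s hs.
    assert (hfz : 0 < Rabs (f z)).
    { apply Rabs_pos_lt. destruct hs as [[h _]|[h _]]; lra. }
    destruct (hc z (Rabs (f z)) hfz) as [d [hd hd']].
    exists d; split; auto. intros y hy.
    destruct (Req_dec y z) as [->|hyz].
    - destruct hs as [[h ->]|[h ->]]; lra.
    - assert (hh := hd' y (conj (conj I (not_eq_sym hyz)) hy)).
      simpl in hh. unfold R_dist in hh.
      apply Rabs_def2 in hh.
      destruct hs as [[h ->]|[h ->]].
      + rewrite Rabs_left in hh by lra. lra.
      + rewrite Rabs_right in hh by lra. lra. }
  assert (hfa : f a = 0).
  { destruct (Rtotal_order (f a) 0) as [h|[h|h]]; auto.
    - exfalso.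
      destruct (hcont a 1 (or_introl (conj h eq_refl))) as [d [hd hd']].
      assert (haA' : a < A) by (destruct (Req_dec a A); [subst; fold A in hpos; lra | lra]).
      set (b := Rmin (a + d/2) A).
      assert (E b).
      { split. unfold b. split; [apply Rmin_glb; lra | apply Rmin_r].
        intros y hy. destruct (Rlt_or_le y a).
        - apply hbelow; lra.
        - assert (hy' : Rabs (y - a) < d).
          { unfold b in hy. rewrite Rabs_right by lra.
            assert (Rmin (a + d/2) A <= a + d/2) by apply Rmin_l. lra. }
          specialize (hd' y hy'). lra. }
      assert (b <= a) by (apply hub; auto).
      unfold b in *. revert H0. apply Rmin_case; lra.
    - exfalso.
      destruct (hcont a (-1) (or_intror (conj h eq_refl))) as [d [hd hd']].
      destruct (Req_dec a 0) as [ha|ha].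
      { rewrite ha in h; lra. }
      set (y := Rmax 0 (a - d/2)).
      assert (hy : 0 <= y < a).
      { unfold y. split; [apply Rmax_l | apply Rmax_lub_lt; lra]. }
      assert (Rabs (y - a) < d).
      { rewrite Rabs_left by lra. unfold y.
        assert (a - d/2 <= Rmax 0 (a - d/2)) by apply Rmax_r. lra. }
      specialize (hd' y H). specialize (hbelow y hy). lra. }
  exists a. split; [split; [|split]|].
  - destruct (Req_dec a 0) as [h|h]; [rewrite h in hfa; lra | lra].
  - exact hfa.
  - intros b hb hfb. destruct (Rlt_or_le b a) as [h|h]; auto.
    specialize (hbelow b (conj (Rlt_le _ _ hb) h)). lra.
  - destruct (Req_dec a A) as [h|h]; [rewrite h in hfa; lra | lra].
Qed.
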